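(* Let $S$ be a semiring. A left $S$-semimodule $P$ is $k$-projective if and only if every short exact sequence of left $S$-semimodules $0\to A\xrightarrow{f}B\xrightarrow{g}P\to0$ is right-splitting, i.e. there exists an $S$-linear $g':P\to B$ with $g\circ g'=\mathrm{id}_P$.
   Context: A semiring $(S,+,0,\cdot,1)$ consists of a commutative monoid $(S,+,0)$ and a monoid $(S,\cdot,1)$ with $0\neq 1$, absorbing zero and both distributive laws; left $S$-semimodules and $S$-linear maps are as for modules without subtraction. For an $S$-linear $h:X\to Y$, $\mathrm{Ker}(h)=\{x\mid h(x)=0\}$; $h$ is $k$-normal if $h(x)=h(x')$ implies $x+k=x'+k'$ for some $k,k'\in\mathrm{Ker}(h)$; a normal epimorphism is a surjective $k$-normal map. A short exact sequence $0\to A\xrightarrow{f}B\xrightarrow{g}C\to0$ means: $f$ injective, $f(A)=\mathrm{Ker}(g)$, $g$ surjective and $k$-normal. $P$ is $k$-projective if for every left $S$-semimodule $M$, every normal epimorphism $f:M\to N$ and every $S$-linear $g:P\to N$, there exists an $S$-linear $h:P\to M$ with $f\circ h=g$. *)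

(* Defs.v *)
From HB Require Import structures.
From mathcomp Require Import all_boot all_algebra.
Set Implicit Arguments.
Unset Strict Implicit.
Unset Printing Implicit Defensive.
Import GRing.Theory.
Local Open Scope ring_scope.

Section Defs.
Variable S : nzSemiRingType.

Definition slinear (X Y : lSemiModType S) (h : X -> Y) : Prop :=
  h 0 = 0 /\ (forall x y, h (x + y) = h x + h y) /\
  (forall (a : S) x, h (a *: x) = a *: h x).

Definition inKer (X Y : lSemiModType S) (h : X -> Y) (x : X) : Prop := h x = 0.

Definition k_normal (X Y : lSemiModType S) (h : X -> Y) : Prop :=
  forall x x', h x = h x' ->
    exists k k', inKer h k /\ inKer h k' /\ x + k = x' + k'.

Definition normal_epi (X Y : lSemiModType S) (h : X -> Y) : Prop :=
  (forall y, exists x, h x = y) /\ k_normal h.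

Definition short_exact (A B C : lSemiModType S) (f : A -> B) (g : B -> C) : Prop :=
  injective f /\ (forall b, inKer g b <-> exists a, f a = b) /\ normal_epi g.

Definition k_projective (P : lSemiModType S) : Prop :=
  forall (M N : lSemiModType S) (f : M -> N) (g : P -> N),
    slinear f -> normal_epi f -> slinear g ->
    exists h : P -> M, slinear h /\ (forall p, f (h p) = g p).

End Defs.

(* Main.v *)
Require Import Defs.
From HB Require Import structures.
From mathcomp Require Import all_boot all_algebra.
Set Implicit Arguments. Unset Strict Implicit. Unset Printing Implicit Defensive.
Import GRing.Theory.
Local Open Scope ring_scope.

Section Eqz.
Variables (S : nzSemiRingType) (X Y : lSemiModType S) (u v : X -> Y).
Hypotheses (hu : slinear u) (hv : slinear v).

Definition eqz_pred : pred X := fun x => u x == v x.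

Lemma eqz_closed : subsemimod_closed eqz_pred.
Proof.
case: hu => [u0 [uD uZ]]; case: hv => [v0 [vD vZ]].
split; [split|].
- by rewrite ?unfold_in /eqz_pred /= u0 v0.
- by move=> x y /eqP hx /eqP hy; rewrite ?unfold_in /eqz_pred uD vD hx hy.
- by move=> a x /eqP hx; rewrite ?unfold_in /eqz_pred uZ vZ hx.
Qed.

Record eqz (hu' : slinear u) (hv' : slinear v) := Eqz { eqz_val : X; _ : eqz_pred eqz_val }.
HB.instance Definition _ := [isSub for @eqz_val hu hv].
HB.instance Definition _ := [Choice of eqz hu hv by <:].
HB.instance Definition _ := GRing.SubChoice_isSubLSemiModule.Build S X eqz_pred (eqz hu hv) eqz_closed.

Lemma eqz_lin : slinear (@eqz_val hu hv : eqz hu hv -> X).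
Proof. split; [by []| split; by []]. Qed.
End Eqz.


Lemma eqzP (S : nzSemiRingType) (X Y : lSemiModType S) (u v : X -> Y)
  (hu : slinear u) (hv : slinear v) (q : eqz hu hv) : u (eqz_val q) = v (eqz_val q).
Proof. by case: q => x /= /eqP. Qed.

Theorem mainTheorem8 (S : nzSemiRingType) (P : lSemiModType S) :
  k_projective P <->
  (forall (A B : lSemiModType S) (f : A -> B) (g : B -> P),
     slinear f -> slinear g -> short_exact f g ->
     exists g' : P -> B, slinear g' /\ (forall p, g (g' p) = p)).
Proof.
split.
  move=> kP A B f g hf hg [_ [_ hepi]].
  have hid : slinear (fun p : P => p) by [].
  have [h [hh hgh]] := kP B P g (fun p => p) hg hepi hid.
  by exists h.
move=> H M N f g hf [fsurj fkn] hg.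
case: (hf) => [f0 [fD fZ]]; case: (hg) => [g0 [gD gZ]].
have hu : slinear (fun x : M * P => f x.1).
  by split; [|split] => /=; [exact: f0|move=> x y; exact: fD|move=> a x; exact: fZ].
have hv : slinear (fun x : M * P => g x.2).
  by split; [|split] => /=; [exact: g0|move=> x y; exact: gD|move=> a x; exact: gZ].
have [v0 [vD vZ]] := eqz_lin hu hv.
pose pi := fun q : eqz hu hv => (eqz_val q).2.
have hpi : slinear pi.
  by split; [|split]; rewrite /pi => *; [rewrite v0|rewrite vD|rewrite vZ].
have hz : slinear (fun _ : eqz hu hv => (0 : P)).
  split; first by []. split; first by move=> *; rewrite addr0. by move=> *; rewrite scaler0.
have [w0 [wD wZ]] := eqz_lin hpi hz.
have hse : short_exact (@eqz_val _ _ _ _ _ hpi hz) pi.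
  split; first exact: val_inj.
  split.
    move=> b; split.
      move=> hb; have pb : eqz_pred pi (fun _ => 0) b by apply/eqP.
      by exists (Eqz hpi hz pb).
    by case=> a <-; rewrite /inKer (eqzP a).
  split.
    move=> p; have [m hm] := fsurj (g p).
    have pq : eqz_pred (fun x : M * P => f x.1) (fun x => g x.2) (m, p) by apply/eqP.
    by exists (Eqz hu hv pq).
  move=> q q' hqq.
  have e : f (eqz_val q).1 = f (eqz_val q').1.
    by rewrite (eqzP q) (eqzP q'); congr g.
  have [k [k' [hk [hk' hkk]]]] := fkn _ _ e.
  have pk : eqz_pred (fun x : M * P => f x.1) (fun x => g x.2) (k, 0).
    by apply/eqP; rewrite /= g0.
  have pk' : eqz_pred (fun x : M * P => f x.1) (fun x => g x.2) (k', 0).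
    by apply/eqP; rewrite /= g0.
  exists (Eqz hu hv pk), (Eqz hu hv pk').
  split; first by rewrite /inKer /pi.
  split; first by rewrite /inKer /pi.
  apply: val_inj; rewrite /=.
  move: hkk hqq; rewrite /pi; case: (eqz_val q) => a b; case: (eqz_val q') => a' b' /= e1 e2.
  rewrite -[LHS]/(a + k, b + 0) -[RHS]/(a' + k', b' + 0).
  by rewrite e1 e2.
have [g' [[g'0 [g'D g'Z]] hg']] := H _ _ _ _ (eqz_lin hpi hz) hpi hse.
exists (fun p => (eqz_val (g' p)).1).
split.
  split; first by rewrite g'0 v0.
  by split=> *; [rewrite g'D vD|rewrite g'Z vZ].
move=> p; rewrite (eqzP (g' p)) /=.
by have := hg' p; rewrite /pi => ->.
Qed.
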